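(* Let $N_{\mathcal{C}}\ge 1$ and let $(X_1,Y_1),\dots,(X_{N_{\mathcal{C}}},Y_{N_{\mathcal{C}}}),(X',Y')$ be exchangeable random variables taking values in $\mathcal{X}\times\mathcal{Y}$. Let $K\ge 1$ and let $s_k:\mathcal{X}\times\mathcal{Y}\to\mathbb{R}$, $k=1,\dots,K$, be fixed measurable maps, and set $s(x,y):=(s_1(x,y),\dots,s_K(x,y))\in\mathbb{R}^K$. Let $\{\mathcal{A}_t\}_{t\ge 0}$ be a fixed (non-random) family of subsets of $\mathbb{R}^K$ that is nested, i.e. $\mathcal{A}_{t_1}\subseteq\mathcal{A}_{t_2}$ whenever $0\le t_1\le t_2$, and let $\lesssim$ be the pre-order on $\mathbb{R}^K$ it induces: $a\lesssim b$ if and only if for every $t\ge 0$, $b\in\mathcal{A}_t$ implies $a\in\mathcal{A}_t$. Let $\alpha\in(0,1)$, write $S_i:=s(X_i,Y_i)$ for $i=1,\dots,N_{\mathcal{C}}$, and let $S_{(1)}\lesssim S_{(2)}\lesssim\dots\lesssim S_{(N_{\mathcal{C}})}$ be the calibration scores $\{S_i\}$ sorted according to $\lesssim$. Define $$\mathcal{Q}(\alpha):=\{v\in\mathbb{R}^K : v\lesssim S_{(\lceil (N_{\mathcal{C}}+1)(1-\alpha)\rceil)}\},$$ with the convention $\mathcal{Q}(\alpha)=\mathbb{R}^K$ if $\lceil (N_{\mathcal{C}}+1)(1-\alpha)\rceil> N_{\mathcal{C}}$, and for $x\in\mathcal{X}$ let $\mathcal{C}(x):=\{y\in\mathcal{Y}: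 s(x,y)\in\mathcal{Q}(\alpha)\}$. Then $$\mathbb{P}\big(Y'\in\mathcal{C}(X')\big)\ge 1-\alpha .$$
   Context: This is a multivariate-score extension of split conformal prediction: $(X_i,Y_i)$ form the calibration set, $(X',Y')$ is the test point, and the probability is over the joint distribution of calibration and test data. Because the sets $\mathcal{A}_t$ are nested, the relation $\lesssim$ is a total pre-order (any two vectors are comparable, though distinct vectors may be equivalent), so the calibration scores can be sorted under it (ties broken arbitrarily). Equivalently, $a\lesssim b$ iff $t(a)\le t(b)$ in the sense of the sets $\{t: a\in\mathcal{A}_t\}$, where $t(v):=\inf\{t\ge0: v\in\mathcal{A}_t\}$. *)

(* Defs.v *)
From HB Require Import structures.
From mathcomp Require Import all_boot all_order all_algebra all_fingroup.
From mathcomp Require Import all_classical all_reals all_analysis.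
Unset Printing Implicit Defensive.
Import Order.TTheory GRing.Theory Num.Theory.
Local Open Scope classical_set_scope.
Local Open Scope ring_scope.

Section Defs.
Context {R : realType}.

Definition prod_rect {dT : measure_display} (T : measurableType dT) (n : nat)
  : set (set ('I_n -> T)) :=
  [set B | exists C : 'I_n -> set T,
     (forall i, measurable (C i)) /\ B = [set z | forall i, C i (z i)]].

Definition prod_measurable {dT : measure_display} (T : measurableType dT) (n : nat)
  : set (set ('I_n -> T)) := <<s prod_rect T n >>.

Definition exchangeable {d : measure_display} {Omega : measurableType d}
  (P : probability Omega R) {dT : measure_display} {T : measurableType dT}
  {n : nat} (Z : 'I_n -> Omega -> T) : Prop :=
  forall (sigma : {perm 'I_n}) (B : set ('I_n -> T)),
    prod_measurable T n B ->
    P [set w | B (fun i => Z i w)] = P [set w | B (fun i => Z (sigma i) w)].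

Definition preord {K : nat} (A : R -> set ('I_K -> R)) (a b : 'I_K -> R) : Prop :=
  forall t, 0 <= t -> A t b -> A t a.

Definition score {T : Type} {K : nat} (s : 'I_K -> T -> R) (z : T) : 'I_K -> R :=
  fun k => s k z.

(* the j-th (0-based) element of the scores sorted according to the pre-order
   (ties broken arbitrarily by the sorting algorithm) *)
Definition order_stat {K : nat} (A : R -> set ('I_K -> R))
  (S : seq ('I_K -> R)) (j : nat) : 'I_K -> R :=
  nth (fun=> 0) (sort (fun a b => `[< preord A a b >]) S) j.

Definition qidx (N : nat) (alpha : R) : int := Num.ceil ((N.+1)%:R * (1 - alpha)).

Definition Qset {K : nat} (A : R -> set ('I_K -> R)) (N : nat)
  (S : seq ('I_K -> R)) (alpha : R) : set ('I_K -> R) :=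
  if (N%:Z < qidx N alpha)%R then setT
  else [set v | preord A v (order_stat A S (`|qidx N alpha|%N).-1)].

Definition conf_set {X Y : Type} {K : nat} (s : 'I_K -> X * Y -> R)
  (A : R -> set ('I_K -> R)) (alpha : R) {N : nat} (cal : 'I_N -> X * Y)
  (x : X) : set Y :=
  [set y | Qset A N (map (fun i => score s (cal i)) (enum 'I_N)) alpha
             (score s (x, y))].

(* data vector z : 'I_N.+1 -> X * Y: calibration points are z i for i < N,
   the test point is z ord_max *)
Definition calib {T : Type} {N : nat} (z : 'I_N.+1 -> T) : 'I_N -> T :=
  fun i => z (widen_ord (leqnSn N) i).

Definition covered {X Y : Type} {K : nat} (s : 'I_K -> X * Y -> R)
  (A : R -> set ('I_K -> R)) (alpha : R) {N : nat} (z : 'I_N.+1 -> X * Y) : Prop :=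
  conf_set s A alpha (calib z) (z ord_max).1 (z ord_max).2.

End Defs.

(* Main.v *)
Require Import Defs.
From HB Require Import structures.
From mathcomp Require Import all_boot all_order all_algebra all_fingroup.
From mathcomp Require Import all_classical all_reals all_analysis.
Import Order.TTheory GRing.Theory Num.Theory.
Local Open Scope classical_set_scope.
Local Open Scope ring_scope.
From mathcomp Require Import lra.

Lemma comb_count (I : finType) (r : rel I) (rr : reflexive r) (rt : transitive r)
  (rtot : total r) (m : nat) :
  (m < #|I|)%N -> (m < #|[pred j | #|[pred i | ~~ r j i]| <= m]|)%N.
Proof.
move=> mI; set c := fun j => #|[pred i | ~~ r j i]|.
rewrite ltnNge; apply/negP => HG.
have : (0 < #|[pred j | ~~ (c j <= m)]|)%N.
  have := cardC [pred j | (c j <= m)%N].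
  move=> e; move: mI; rewrite -e.
  have -> : #|[predC [pred j | (c j <= m)%N]]| = #|[pred j | ~~ (c j <= m)%N]|.
    by apply: eq_card => x.
  move=> h; rewrite lt0n; apply/eqP => h0; move: h; rewrite h0 addn0.
  by rewrite ltnNge HG.
case/card_gt0P => j0 Hj0.
case: (@arg_minnP _ j0 [pred j | ~~ (c j <= m)%N] c Hj0) => j Bj Hmin.
move: Bj; rewrite inE => /negP; apply.
rewrite /c; apply: leq_trans HG; apply: subset_leq_card.
apply/fintype.subsetP => i; rewrite !inE => Hji.
rewrite leqNgt; apply/negP => Hci.
have := Hmin i; rewrite inE -ltnNge => /(_ Hci).
rewrite leqNgt => /negP; apply.
apply: proper_card; apply/properP; split.
  apply/fintype.subsetP => k; rewrite !inE; apply: contra => rjk.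
  have rij : r i j by case/orP: (rtot i j) => // rji; rewrite rji in Hji.
  exact: rt rij rjk.
by exists i; rewrite !inE ?rr.
Qed.

Lemma sort_nth_char (T : Type) (r : rel T) (rr : reflexive r) (rt : transitive r)
  (rtot : total r) (L : seq T) (m : nat) (x d : T) :
  (m < size L)%N -> (count (fun y => ~~ r x y) L <= m)%N ->
  r x (nth d (sort r L) m).
Proof.
move=> mL Hc; apply/negPn/negP => Hn.
set S := sort r L.
have sS : sorted r S := sort_sorted rtot L.
have szS : size S = size L by rewrite size_sort.

have hall : all (fun y => ~~ r x y) (take m.+1 S).
  apply/(all_nthP d) => k; rewrite size_takel ?szS // => kl.
  rewrite nth_take //.
  have hk : r (nth d S k) (nth d S m).
    apply: (sorted_leq_nth rt rr) => //; rewrite ?inE ?szS //.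
    exact: leq_trans kl mL.
  by apply: contra Hn => h; exact: rt h hk.
have : (m.+1 <= count (fun y => ~~ r x y) L)%N.
  rewrite -(count_sort r) -/S -(cat_take_drop m.+1 S) count_cat.
  move: hall; rewrite all_count => /eqP ->; rewrite size_takel ?szS //.
  exact: leq_addr.
by rewrite ltnNge Hc.
Qed.
Lemma pre_meas (d : measure_display) (Omega : measurableType d)
  (dT : measure_display) (T : measurableType dT) (n : nat)
  (f : Omega -> ('I_n -> T)) :
  (forall i, measurable_fun setT (fun w => f w i)) ->
  forall B, prod_measurable T n B -> measurable [set w | B (f w)].
Proof.
move=> mf B HB.
apply: (HB [set B | measurable [set w | B (f w)]]); split.
- split => /=.
  + by rewrite [X in measurable X](_ : _ = set0) //; apply/seteqP; split => w.
  + move=> A mA.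
    rewrite [X in measurable X](_ : _ = ~` [set w | A (f w)]); first exact: measurableC.
    by apply/seteqP; split => w /=; rewrite /setD /=; [case | ].
  + move=> F mF.
    rewrite [X in measurable X](_ : _ = \bigcup_k [set w | F k (f w)]); first exact: bigcupT_measurable.
    by apply/seteqP; split => w /=.
- move=> _ [C [mC ->]] /=.
  rewrite [X in measurable X](_ : _ = \bigcap_(i in setT) ((fun w => f w i) @^-1` C i)).
    apply: fin_bigcap_measurable; first exact: finite_finset.
    move=> i _; have := mf i measurableT (C i) (mC i); by rewrite setTI.
  by apply/seteqP; split => w /=; [move=> h i _; exact: h | move=> h i; exact: h].
Qed.

Theorem theorem1 (R : realType) (d : measure_display) (Omega : measurableType d)
  (P : probability Omega R)
  (dX dY : measure_display) (X : measurableType dX) (Y : measurableType dY)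
  (N : nat) (Z : 'I_N.+1 -> Omega -> X * Y)
  (K : nat) (s : 'I_K -> X * Y -> R) (A : R -> set ('I_K -> R)) (alpha : R) :
  (1 <= N)%N ->
  (forall i, measurable_fun setT (Z i)) ->
  exchangeable P Z ->
  (1 <= K)%N ->
  (forall k, measurable_fun setT (s k)) ->
  (forall t1 t2 : R, 0 <= t1 -> t1 <= t2 -> A t1 `<=` A t2) ->
  0 < alpha < 1 ->
  prod_measurable (X * Y)%type N.+1 (@covered R X Y K s A alpha N) ->
  ((1 - alpha)%:E <=
   P [set w | conf_set s A alpha (calib (fun i => Z i w))
                (Z ord_max w).1 (Z ord_max w).2])%E.
Proof.
move=> N1 mZ exch K1 ms nest /andP[a0 a1] mcov.
set r := fun a b : 'I_K -> R => `[< preord A a b >].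
have rr : reflexive r by move=> a; apply/asboolP.
have rt : transitive r.
  by move=> b a c /asboolP h1 /asboolP h2; apply/asboolP => t t0 h; exact: h1 t t0 (h2 t t0 h).
have rtot : total r.
  move=> a b; apply/orP; case: (pselect (preord A a b)) => [h|h].
    by left; apply/asboolP.
  right; apply/asboolP.
  have [t [t0 bt nat]] : exists t, [/\ 0 <= t, A t b & ~ A t a].
    apply: contrapT => hn; apply: h => t t0 bt; apply: contrapT => nat; apply: hn.
    by exists t; split.
  move=> t' t'0 at'; case: (leP t t') => tt'.
    exact: (nest t t' t0 tt' _ bt).
  by exfalso; apply: nat; apply: (nest t' t t'0 (ltW tt') _ at').
case hq: (N%:Z < qidx N alpha)%R.
  rewrite [X in P X](_ : _ = setT); last first.
    by apply/seteqP; split => // w _; rewrite /conf_set /Qset /= hq.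
  by rewrite probability_setT lee_fin; lra.
have q0 : (0 < qidx N alpha)%R.
  by rewrite /qidx ceil_gt0; apply: mulr_gt0; [rewrite ltr0n | rewrite subr_gt0].
pose n := `|qidx N alpha|%N.
have qE : qidx N alpha = n%:Z by rewrite /n gtz0_abs.
have n0 : (0 < n)%N by rewrite -ltz_nat -qE.
have nN : (n <= N)%N by rewrite -lez_nat -qE leNgt hq.
pose m := n.-1.
have mn : m.+1 = n := prednK n0.
have hR : (N.+1%:R * (1 - alpha) <= n%:R :> R).
  have := ceil_ge (N.+1%:R * (1 - alpha) : R).
  by change (Num.ceil (N.+1%:R * (1 - alpha) : R)) with (qidx N alpha); rewrite qE.
pose sig (j : 'I_N.+1) : {perm 'I_N.+1} := tperm j ord_max.
pose E j := [set w | @covered R X Y K s A alpha N (fun i => Z (sig j i) w)].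
pose E0 := [set w | @covered R X Y K s A alpha N (fun i => Z i w)].
have mE : forall j, measurable (E j).
  move=> j; have := (@pre_meas _ _ _ _ _ (fun w i => Z (sig j i) w) (fun i => mZ (sig j i)) _ mcov). exact.
have mE0 : measurable E0.
  exact: (@pre_meas _ _ _ _ _ (fun w i => Z i w) (fun i => mZ i) _ mcov).
have PE : forall j, P (E j) = P E0 by move=> j; exact: esym (exch (sig j) _ mcov).
change ((1 - alpha)%:E <= P E0)%E.
have key : forall w, (n%:R <= \sum_(j < N.+1) (\1_(E j) w : R))%R.
  move=> w.
  pose sc i := score s (Z i w).
  pose rI : rel 'I_N.+1 := fun i j => r (sc i) (sc j).
  have rIr : reflexive rI by move=> i; exact: rr.
  have rIt : transitive rI by move=> j i k; exact: rt.
  have rItot : total rI by move=> i j; exact: rtot.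
  have hcomb := @comb_count _ rI rIr rIt rItot m.
  rewrite card_ord in hcomb.
  have mN : (m < N)%N by rewrite mn.
  have {}hcomb := hcomb (ltnW mN).
  have claim : forall j, (#|[pred i | ~~ rI j i]| <= m)%N -> E j w.
    move=> j hc.
    rewrite /E /= /covered /conf_set /Qset /= hq qE /=.
    apply/asboolP; rewrite /order_stat.
    rewrite tpermR -surjective_pairing.
    apply: (@sort_nth_char _ r rr rt rtot) => //.
      by rewrite size_map size_enum_ord -mn.
    apply: leq_trans hc; apply: eq_leq; rewrite count_map -sum1_count big_enum_cond /= -sum1_card.
    rewrite [RHS](reindex_inj (@perm_inj _ (sig j))) /= [RHS]big_mkcond big_ord_recr /= tpermR inE /= (rIr j) addn0 big_mkcond.
    by apply: eq_bigr => i _; rewrite inE.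
  have h1 : (\sum_(j in [pred j | (#|[pred i | ~~ rI j i]| <= m)%N]) (1:R))
      <= \sum_(j < N.+1) \1_(E j) w.
    rewrite big_mkcond /=; apply: ler_sum => j _; case: ifP => hj.
      rewrite indicE mem_set ?lexx //; apply: claim; by move: hj; rewrite inE.
    by rewrite indicE ler0n.
  apply: le_trans h1; rewrite sumr_const -mn ler_nat; exact: hcomb.
have Hint : ((n%:R)%:E <= \sum_(j < N.+1) P (E j))%E.
  have -> : \sum_(j < N.+1) P (E j) = (\int[P]_(w in setT) (\sum_(j < N.+1) (\1_(E j) w)%:E))%E.
    rewrite ge0_integral_sum //.
    - by apply: eq_bigr => j _; rewrite integral_indic // setIT.
    - by move=> j; apply/measurable_realfun.measurable_EFinP; exact: measurable_realfun.measurable_indic.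
  rewrite -[X in (X <= _)%E]mule1 -(probability_setT P) -integral_cst //.
  apply: ge0_le_integral => //.
  - by move=> x _; rewrite lee_fin.
  - by apply: emeasurable_sum => j; apply/measurable_realfun.measurable_EFinP; exact: measurable_realfun.measurable_indic.
  - by move=> x _; rewrite sumEFin lee_fin; exact: key.
have PE0 : \sum_(j < N.+1) P (E j) = (P E0 *+ N.+1)%E.
  by rewrite (eq_bigr _ (fun j _ => PE j)) sumr_const card_ord.
have [x Hx] : exists x, P E0 = x%:E.
  have fin : P E0 \is a fin_num.
    by rewrite ge0_fin_numE ?measure_ge0 // (le_lt_trans (probability_le1 P mE0)) ?ltey.
  by exists (fine (P E0)); rewrite fineK.
rewrite Hx lee_fin.
rewrite PE0 Hx -EFin_natmul lee_fin in Hint.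
have : N.+1%:R * (1 - alpha) <= N.+1%:R * x by rewrite [X in _ <= X]mulr_natl; exact: le_trans hR Hint.
by rewrite ler_pM2l // ltr0n.
Qed.
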